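(* Let $(\mathcal{A},\varphi)$ be a tracial noncommutative probability space with universal enveloping traffic space $(\mathcal{B},\psi)=(\mathcal{G}(\mathcal{A}),\psi)$. Let $t\in\mathcal{G}(\mathcal{A})$ be (the class of) a graph monomial with vertices $v\neq w$ forming a 3-connection (i.e. $\lambda_t(v,w)\ge3$ in the underlying undirected multigraph). Then $t_{v\sim w}\equiv t\pmod\psi$, where $t_{v\sim w}$ is the graph monomial obtained from $t$ by identifying $v$ and $w$.
   Context: $(\mathcal{A},\varphi)$: unital complex algebra with unital tracial linear functional; free cumulants $\kappa_n$ determined by $\varphi(a_1\cdots a_n)=\sum_{\pi\in NC(n)}\prod_{B\in\pi}\kappa_{|B|}[(a_i)_{i\in B}]$. A graph monomial in $\mathcal{A}$ is a finite connected directed multigraph $(V,E,\mathrm{src},\mathrm{tgt})$ (loops, parallel edges allowed) with distinguished, not necessarily distinct, vertices $v_{\mathrm{in}},v_{\mathrm{out}}$ and edge labels in $\mathcal{A}$, up to isomorphism. $\iota(a)$: two vertices, one edge from $v_{\mathrm{in}}$ to $v_{\mathrm{out}}$ labelled $a$. Substitution $Z_g(t_1,\dots,t_K)$ for a connected bi-rooted multidigraph $g$ with ordered edges $e_1,\dots,e_K$ replaces each $e_i$ by a copy of $t_i$, identifying $\mathrm{src}(e_i)$ with the input and $\mathrm{tgt}(e_i)$ with the output of $t_i$; the product $t_1t_2$ identifies the input of $t_1$ with the output of $t_2$ (output of $t_1$ and input of $t_2$ become output and input). $\mathcal{G}(\mathcal{A})$ is the span of graph monomials modulo the span of $Z_g(\iota(a_1),\dots,\iota(a_K))-Z_g(P(\iota(b_1),\dots,\iota(b_n)),\iota(a_2),\dots)$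 (any edge position) for $a_1=P(b_1,\dots,b_n)$, $P$ a noncommutative polynomial. A test graph is a finite connected directed multigraph with labels in $\mathcal{A}$; $T^\pi$ identifies vertices in blocks of a partition $\pi$. Cactus: connected multigraph with each edge in exactly one simple cycle (loops, pairs of parallel edges count); pads = these cycles; oriented cactus: every pad directed. $\tau^0_\varphi[T]=\prod_{C\in\mathrm{Pads}(T)}\kappa_{n_C}[\gamma(e_1),\dots,\gamma(e_{n_C})]$ for oriented cacti (edges listed with $\mathrm{src}(e_i)=\mathrm{tgt}(e_{i+1})$, indices mod $n_C$), else $0$; $\tau_\varphi[T]=\sum_\pi\tau^0_\varphi[T^\pi]$ over partitions of the vertex set. $\psi(t)=\tau_\varphi[\tilde\Delta(t)]$ where $\tilde\Delta(t)$ identifies input and output and forgets roots (well defined on $\mathcal{G}(\mathcal{A})$). $s\equiv t\pmod\psi$ means $\psi((s-t)u)=0$ for all $u\in\mathcal{G}(\mathcal{A})$. $\lambda_t(v,w)$: minimal number of edges whose deletion disconnects $v$ and $w$. *)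

(* Defs.v *)
From HB Require Import structures.
From mathcomp Require Import all_boot all_algebra.
From mathcomp Require Import reals complex.
Set Implicit Arguments.
Unset Strict Implicit.
Unset Printing Implicit Defensive.
Import GRing.Theory Num.Theory.
Local Open Scope ring_scope.

Definition noncrossing (n : nat) (P : {set {set 'I_n}}) : bool :=
  [forall B1 in P, forall B2 in P, forall a : 'I_n, forall b : 'I_n,
   forall c : 'I_n, forall d : 'I_n,
     ((B1 != B2) && ((a < b)%N && (b < c)%N && (c < d)%N)
       && (a \in B1) && (c \in B1) && (b \in B2) && (d \in B2)) ==> false].

Definition is_NC (n : nat) (P : {set {set 'I_n}}) : bool :=
  partition P [set: 'I_n] && noncrossing P.

(* kappa is a family of free cumulants for phi: for every n and a_1..a_n,
   phi(a_1 ... a_n) = sum_{pi in NC(n)} prod_{B in pi} kappa_{|B|}[(a_i)_{i in B}]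
   (the a_i, i in B, listed in increasing order of i).  kappa_n is encoded as
   the restriction of kappa : seq A -> C to sequences of size n. *)
Definition free_cumulants (C : pzRingType) (A : pzRingType) (phi : A -> C)
    (kappa : seq A -> C) : Prop :=
  forall s : seq A,
    phi (\prod_(a <- s) a) =
    \sum_(P : {set {set 'I_(size s)}} | is_NC P)
       \prod_(B in P) kappa [seq nth 0 s (nat_of_ord i) | i <- enum B].

(* A graph has a vertex carrier type gV, a vertex set verts (the actual     *)
(* vertices), an edge type gE (all elements are edges), source, target and  *)
(* label maps.                                                              *)

Record graph (A : Type) := Graph {
  gV : finType;
  gE : finType;
  verts : {set gV};
  src : gE -> gV;
  tgt : gE -> gV;
  lab : gE -> A }.

Arguments verts {A} _.
Arguments src {A} _ _.
Arguments tgt {A} _ _.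
Arguments lab {A} _ _.

Section Graphs.
Variable A : Type.
Implicit Types g : graph A.

Definition graph_wf g : bool :=
  [forall e, (src g e \in verts g) && (tgt g e \in verts g)].

Definition uadj g (F : {set gE g}) : rel (gV g) :=
  fun x y => [exists e in F, ((src g e == x) && (tgt g e == y))
                          || ((src g e == y) && (tgt g e == x))].

Definition linked g (F : {set gE g}) (x y : gV g) : bool := connect (uadj F) x y.

Definition gconnected g : bool :=
  [forall x in verts g, forall y in verts g, linked [set: gE g] x y].

(* lambda_g(v,w): minimal number of edges whose deletion disconnects v, w
   (the default value #|E| is attained by deleting all edges when v != w). *)
Definition edge_conn g (v w : gV g) : nat :=
  \big[minn/#|gE g|]_(S : {set gE g} | ~~ linked (~: S) v w) #|S|.

Definition gmap g (f : gV g -> gV g) : graph A :=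
  @Graph A (gV g) (gE g) (f @: verts g) (fun e => f (src g e))
         (fun e => f (tgt g e)) (lab g).

(* C is the edge set of a simple (undirected) cycle: edges e_0..e_{k-1}
   distinct, vertices v_0..v_{k-1} distinct, e_i joins v_i and v_{i+1 mod k};
   k = 1 is a loop, k = 2 a pair of parallel edges. *)
Definition ucycle_set g (C : {set gE g}) : bool :=
  [exists k : 'I_(#|gE g|).+1, exists es : {ffun 'I_k -> gE g},
   exists vs : {ffun 'I_k -> gV g},
     [&& (0 < k)%N, injectiveb es, injectiveb vs, C == es @: [set: 'I_k] &
      [forall i : 'I_k,
        ((src g (es i) == vs i) && (tgt g (es i) == vs (ordS i)))
        || ((src g (es i) == vs (ordS i)) && (tgt g (es i) == vs i))]]].

Definition pads g : {set {set gE g}} := [set C | ucycle_set C].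

Definition cactus g : bool :=
  gconnected g && [forall e, #|[set C in pads g | e \in C]| == 1%N].

Definition dordering g (C : {set gE g}) (f : {ffun 'I_#|C| -> gE g}) : bool :=
  [&& injectiveb f, f @: [set: 'I_#|C|] == C &
      [forall i : 'I_#|C|, src g (f i) == tgt g (f (ordS i))]].

Definition directed_pad g (C : {set gE g}) : bool :=
  [exists f, @dordering g C f].

Definition oriented_cactus g : bool :=
  cactus g && [forall C in pads g, directed_pad C].

End Graphs.

Arguments dordering {A g} C f.
Arguments gmap {A} g f.
Arguments edge_conn {A} g v w.

Section Traffic.
Variables (C : pzRingType) (A : pzRingType) (kappa : seq A -> C).

Definition pad_cumulant (g : graph A) (P : {set gE g}) : C :=
  match [pick f | @dordering A g P f] with
  | Some f => kappa [seq lab g (f i) | i <- enum 'I_#|P|]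
  | None => 0
  end.

Definition tau0 (g : graph A) : C :=
  if oriented_cactus g then \prod_(P in pads g) pad_cumulant P else 0.

Definition brep (V : finType) (pi : {set {set V}}) (v : V) : V :=
  odflt v [pick x in pblock pi v].

Definition gquot (g : graph A) (pi : {set {set gV g}}) : graph A :=
  gmap g (brep pi).

Definition tau (g : graph A) : C :=
  \sum_(pi : {set {set gV g}} | partition pi (verts g)) tau0 (gquot pi).

End Traffic.

Record gmono (A : Type) := GMono {
  mgraph : graph A;
  vin : gV mgraph;
  vout : gV mgraph }.

Arguments vin {A} _.
Arguments vout {A} _.

Section Monomials.
Variable A : Type.

Definition gmono_wf (t : gmono A) : bool :=
  [&& graph_wf (mgraph t), gconnected (mgraph t),
      vin t \in verts (mgraph t) & vout t \in verts (mgraph t)].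

Definition identify (t : gmono A) (v w : gV (mgraph t)) : gmono A :=
  let f := fun x => if x == w then v else x in
  @GMono A (gmap (mgraph t) f) (f (vin t)) (f (vout t)).

Definition delta (t : gmono A) : graph A :=
  gmap (mgraph t) (fun x => if x == vout t then vin t else x).

Definition sum_map (T1 T2 U1 U2 : Type) (f1 : T1 -> U1) (f2 : T2 -> U2)
  (x : T1 + T2) : U1 + U2 :=
  match x with inl y => inl (f1 y) | inr y => inr (f2 y) end.

(* product t1 t2: disjoint union, input of t1 identified with output of t2;
   output of t1 is the output, input of t2 is the input *)
Definition gmul (t1 t2 : gmono A) : gmono A :=
  let g1 := mgraph t1 in let g2 := mgraph t2 in
  let f := fun x : (gV g1 + gV g2)%type =>
             if x == inr (vout t2) then inl (vin t1) else x in
  let g := @Graph A (gV g1 + gV g2)%type (gE g1 + gE g2)%type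
              (f @: ((@inl (gV g1) (gV g2)) @: verts g1
                     :|: (@inr (gV g1) (gV g2)) @: verts g2))
              (fun e => f (sum_map (src g1) (src g2) e))
              (fun e => f (sum_map (tgt g1) (tgt g2) e))
              (fun e => match e with inl e1 => lab g1 e1 | inr e2 => lab g2 e2 end) in
  @GMono A g (f (inr (vin t2))) (f (inl (vout t1))).

End Monomials.

Section LinComb.
Variables (C : pzRingType) (A : pzRingType).

(* elements of the span of graph monomials: formal finite linear combinations *)
Definition lincomb := seq (C * gmono A).

Definition lc_wf (u : lincomb) : bool := all (fun p => gmono_wf p.2) u.

Definition lc_mul (x y : lincomb) : lincomb :=
  [seq (p.1 * q.1, gmul p.2 q.2) | p <- x, q <- y].

Variable kappa : seq A -> C.

Definition psi (t : gmono A) : C := tau kappa (delta t).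

Definition psi_lc (x : lincomb) : C := \sum_(p <- x) p.1 * psi p.2.

Definition eq_mod_psi (s t : gmono A) : Prop :=
  forall u : lincomb, lc_wf u ->
    psi_lc (lc_mul [:: (1, s); (-1, t)] u) = 0.

End LinComb.

(* Main.v *)
Require Import Defs.
From HB Require Import structures.
From mathcomp Require Import all_boot all_algebra.
From mathcomp Require Import reals complex.
From mathcomp Require Import zify.
From Stdlib Require Import FunctionalExtensionality.
Import GRing.Theory Num.Theory.
Set Implicit Arguments.
Unset Strict Implicit.
Unset Printing Implicit Defensive.

Section GT.
Variable A : Type.
Variable G : graph A.
Implicit Types (F S : {set gE G}) (x y : gV G).

Definition joins (e : gE G) x y :=
  ((src G e == x) && (tgt G e == y)) || ((src G e == y) && (tgt G e == x)).

Lemma uadjP F x y : reflect (exists2 e, e \in F & joins e x y) (uadj F x y).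
Proof. by apply: (iffP existsP) => [[e /andP[eF j]]|[e eF j]]; exists e => //; apply/andP. Qed.

Lemma joinsC e x y : joins e x y = joins e y x.
Proof. by rewrite /joins orbC. Qed.

Lemma uadj_sym F : symmetric (uadj F).
Proof. by move=> x y; apply/uadjP/uadjP => -[e eF j]; exists e => //; rewrite joinsC. Qed.

Lemma linked_sym F x y : linked F x y = linked F y x.
Proof. exact: (sym_connect_sym (uadj_sym F)). Qed.

Lemma linked_trans F x y z : linked F x y -> linked F y z -> linked F x z.
Proof. exact: connect_trans. Qed.

Lemma linked_refl F x : linked F x x.
Proof. exact: connect0. Qed.

Lemma linked_edge F e x y : e \in F -> joins e x y -> linked F x y.
Proof. by move=> eF j; apply: connect1; apply/uadjP; exists e. Qed.

Lemma linked_sub F F' x y : F \subset F' -> linked F x y -> linked F' x y.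
Proof.
move=> sFF'; apply: connect_sub => u z /uadjP[e eF j]; apply: connect1.
by apply/uadjP; exists e => //; apply: (subsetP sFF').
Qed.

Lemma linked_set0 x y : linked set0 x y -> x = y.
Proof.
case/connectP=> [[|z p]] /=; first by move=> _ ->.
by case/andP=> /uadjP[e]; rewrite inE.
Qed.

Lemma linked_split F e x y :
  linked (e |: F) x y -> ~~ linked F x y ->
  (linked F x (src G e) && linked F (tgt G e) y) ||
  (linked F x (tgt G e) && linked F (src G e) y).
Proof.
case/connectP=> p pth ->.
set Q := fun z => [|| linked F x z,
    (linked F x (src G e) && linked F (tgt G e) z) |
    (linked F x (tgt G e) && linked F (src G e) z)].
suff: Q (last x p).
  by rewrite /Q; case/or3P=> [->|->|->] //; rewrite ?orbT.
elim/last_ind: p pth => [|p z IH]; first by rewrite /Q /= linked_refl.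
rewrite rcons_path last_rcons => /andP[/IH Qp /uadjP[e' e'F j]].
move: e'F; rewrite !inE => /orP[/eqP ee'|e'F]; last first.
  have lk : linked F (last x p) z by apply: linked_edge j.
  case/or3P: Qp => [h|/andP[h1 h2]|/andP[h1 h2]]; rewrite /Q.
  - by rewrite (linked_trans h lk).
  - by rewrite (linked_trans h2 lk) h1 ?orbT.
  - by rewrite (linked_trans h2 lk) h1 ?orbT.
rewrite {e'}ee' in j.
case/orP: j => /andP[/eqP su /eqP tz].
- rewrite -tz /Q; rewrite -su in Qp.
  case/or3P: Qp => [h|/andP[h1 h2]|/andP[h1 h2]].
  + by rewrite h linked_refl ?orbT.
  + by rewrite linked_sym in h2; rewrite (linked_trans h1 h2).
  + by rewrite h1 linked_refl ?orbT.
- rewrite -su /Q; rewrite -tz in Qp.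
  case/or3P: Qp => [h|/andP[h1 h2]|/andP[h1 h2]].
  + by rewrite h linked_refl ?orbT.
  + by rewrite h1.
  + by rewrite linked_sym in h2; rewrite (linked_trans h1 h2).
Qed.

Lemma ucycle_of_lists (vl : seq (gV G)) (el : seq (gE G)) v0 e0 :
  size vl = size el -> 0 < size el -> uniq vl -> uniq el ->
  (forall i, i < size el ->
     joins (nth e0 el i) (nth v0 vl i) (nth v0 vl (i.+1 %% size el))) ->
  ucycle_set [set x in el].
Proof.
move=> svl el0 uvl uel hj.
have hk : size el < #|gE G|.+1.
  by rewrite ltnS -(card_uniqP uel); apply: max_card.
apply/existsP; exists (Ordinal hk).
apply/existsP; exists [ffun i : 'I_(size el) => nth e0 el i].
apply/existsP; exists [ffun i : 'I_(size el) => nth v0 vl i].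
apply/and5P; split => //.
- apply/injectiveP => i j; rewrite !ffunE => /eqP.
  by rewrite nth_uniq // => /eqP/val_inj.
- apply/injectiveP => i j; rewrite !ffunE => /eqP.
  by rewrite nth_uniq ?svl // => /eqP/val_inj.
- apply/eqP/setP => x; rewrite inE; apply/idP/imsetP => [xel|[i _ ->]].
    have lt : index x el < size el by rewrite index_mem.
    by exists (Ordinal lt) => //; rewrite ffunE /= nth_index.
  by rewrite ffunE mem_nth.
- by apply/forallP => i; rewrite !ffunE; apply: hj.
Qed.

Lemma joins_eq e x y x' y' : joins e x y -> joins e x' y' ->
  (x = x' /\ y = y') \/ (x = y' /\ y = x').
Proof.
by rewrite /joins => /orP[]/andP[/eqP-> /eqP->] /orP[]/andP[/eqP-> /eqP->]; auto.
Qed.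

Lemma cycle_of_path F e a b :
  a != b -> e \notin F -> joins e b a -> linked F a b ->
  exists C, [/\ ucycle_set C, e \in C, C :\ e \subset F & linked (C :\ e) a b].
Proof.
move=> ab eF jb /connectP[p pth bl]; subst b.
case: (shortenP pth) ab jb => p' pth' up' _ ab jb.
set n := size p'.
set vl := a :: p'.
pose ep x y := odflt e [pick e' in F | joins e' x y].
have epP x y : uadj F x y -> ep x y \in F /\ joins (ep x y) x y.
  move/uadjP => [e1 e1F j1]; rewrite /ep; case: pickP => [e2 /andP[]|/(_ e1)] //=.
  by rewrite e1F j1.
pose L := [seq ep (nth a vl i) (nth a vl i.+1) | i <- iota 0 n].
have sL : size L = n by rewrite size_map size_iota.
have adj i : i < n -> uadj F (nth a vl i) (nth a vl i.+1).
  by move=> lt; move/pathP: pth' => /(_ a i lt).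
have nthL i : i < n -> nth e L i = ep (nth a vl i) (nth a vl i.+1).
  by move=> lt; rewrite (nth_map 0) ?size_iota // nth_iota.
have LF : {subset L <= F}.
  by move=> x /mapP[i0]; rewrite mem_iota add0n => /adj /epP[] + _ ->.
have n0 : 0 < n.
  by move: ab; rewrite /n; case: (p') => //=; rewrite eqxx.
have svl : size vl = n.+1 by [].
have lastn : nth a vl n = last a p' by exact: (nth_last a vl).
have uL : uniq L.
  rewrite map_inj_in_uniq ?iota_uniq // => i j; rewrite !mem_iota !add0n => /= li lj.
  have [_ ji] := epP _ _ (adj _ li); have [_ jj] := epP _ _ (adj _ lj) => eq.
  rewrite eq in ji; have lti : i < size vl by rewrite svl ltnW.
  have ltj : j < size vl by rewrite svl ltnW.
  have lti1 : i.+1 < size vl by rewrite svl.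
  have ltj1 : j.+1 < size vl by rewrite svl.
  case: (joins_eq jj ji) => [[/eqP h _]|[/eqP h1 /eqP h2]].
    by move: h; rewrite nth_uniq // => /eqP.
  move: h1 h2; rewrite !nth_uniq // => /eqP h1 /eqP h2; lia.
exists [set x in rcons L e]; split.
- apply: (@ucycle_of_lists vl _ a e); rewrite ?size_rcons ?sL //.
  + by rewrite rcons_uniq uL andbT; apply: contra eF => /LF.
  + move=> i; rewrite ltnS leq_eqVlt => /orP[/eqP->|lt].
      by rewrite modnn nth_rcons sL ltnn eqxx lastn.
    rewrite modn_small ?ltnS // nth_rcons sL lt nthL //.
    by have [] := epP _ _ (adj _ lt).
- by rewrite inE mem_rcons mem_head.
- apply/subsetP => x; rewrite !inE mem_rcons inE => /andP[xe /orP[/eqP xe'|]].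
    by rewrite xe' eqxx in xe.
  exact: LF.
- apply/connectP; exists p' => //; apply/(pathP a) => i lt.
  have [eiF ji] := epP _ _ (adj _ lt).
  apply/uadjP; exists (nth e L i); last by rewrite nthL.
  rewrite !inE mem_rcons inE mem_nth ?sL // orbT andbT.
  by apply: contraNneq eF => <-; apply: LF; rewrite mem_nth ?sL.
Qed.

Lemma big_minn_le (I : finType) (P : pred I) (f : I -> nat) d i :
  P i -> \big[minn/d]_(j | P j) f j <= f i.
Proof.
move=> Pi; rewrite -big_filter.
have : i \in [seq j <- index_enum I | P j] by rewrite mem_filter Pi mem_index_enum.
elim: [seq j <- _ | _] => [|j r IH] //=; rewrite inE big_cons => /orP[/eqP<-|/IH].
  exact: geq_minl.
by move=> h; rewrite (leq_trans (geq_minr _ _) h).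
Qed.

Lemma card_pads_ge2 e C1 C2 : ucycle_set C1 -> ucycle_set C2 -> C1 != C2 ->
  e \in C1 -> e \in C2 -> 1 < #|[set C in pads G | e \in C]|.
Proof.
move=> u1 u2 n12 e1 e2.
have <- : #|[set C1; C2]| = 2 by rewrite cards2 n12.
apply: subset_leq_card; apply/subsetP => C; rewrite !inE.
by case/orP => /eqP->; rewrite ?u1 ?u2 ?e1 ?e2.
Qed.

Lemma setC_D1 (S : {set gE G}) e : ~: (S :\ e) = e |: ~: S.
Proof. by apply/setP => x; rewrite !inE negb_and negbK orbC. Qed.

Lemma cactus_sep x y : cactus G -> x != y ->
  exists S : {set gE G}, (#|S| <= 2) && ~~ linked (~: S) x y.
Proof.
move=> /andP[_ /forallP cact] xy.
case: (boolP [exists S : {set gE G}, (#|S| <= 2) && ~~ linked (~: S) x y]).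
  by move/existsP.
rewrite negb_exists => /forallP H; exfalso.
have H2 S : #|S| <= 2 -> linked (~: S) x y.
  by move=> c; have := H S; rewrite c /= negbK.
pose Sep := [pred S : {set gE G} | ~~ linked (~: S) x y].
have SepT : Sep [set: gE G].
  rewrite /Sep /= setCT; apply/negP => /linked_set0 exy.
  by rewrite exy eqxx in xy.
case: (arg_minnP (fun S : {set gE G} => #|S|) SepT) => S0 sepS0 minS0.
have c3 : 2 < #|S0|.
  by rewrite ltnNge; apply/negP => /H2; rewrite (negbTE sepS0).
have cross e : e \in S0 -> exists a b, [/\ joins e b a, linked (~: S0) x a & linked (~: S0) b y].
  move=> eS.
  have lk : linked (e |: ~: S0) x y.
    rewrite -setC_D1; apply/negPn/negP => sep.
    have := minS0 _ sep; rewrite (cardsD1 e S0) eS add1n ltnn //.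
  case/orP: (linked_split lk sepS0) => /andP[h1 h2].
    by exists (src G e), (tgt G e); split => //; rewrite /joins !eqxx orbT.
  by exists (tgt G e), (src G e); split => //; rewrite /joins !eqxx.
have [e1 e1S] : exists e1, e1 \in S0.
  by apply/set0Pn; rewrite -card_gt0 (ltn_trans _ c3).
have [e2 e2S] : exists e2, e2 \in S0 :\ e1.
  by apply/set0Pn; rewrite -card_gt0; have := cardsD1 e1 S0; rewrite e1S /=; lia.
have [e3 e3S] : exists e3, e3 \in S0 :\ e1 :\ e2.
  apply/set0Pn; rewrite -card_gt0; have := cardsD1 e2 (S0 :\ e1); rewrite e2S /=.
  by have := cardsD1 e1 S0; rewrite e1S /=; lia.
move: e2S e3S; rewrite !inE => /andP[e21 e2S] /and3P[e32 e31 e3S].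
have [a1 [b1 [j1 xa1 b1y]]] := cross _ e1S.
have nxy : ~~ linked (~: S0) x y := sepS0.
have ab1 : a1 != b1.
  by apply: contraNneq nxy => eab; rewrite (linked_trans xa1) // eab.
have mk e' : e' \in S0 -> e' != e1 -> exists C, [/\ ucycle_set C, e1 \in C,
    C :\ e1 \subset e' |: ~: S0 & e' \in C].
  move=> e'S e'1.
  have [a' [b' [j' xa' b'y]]] := cross _ e'S.
  have sub : ~: S0 \subset e' |: ~: S0 by apply/subsetP => z zS; rewrite in_setU zS orbT.
  have lk : linked (e' |: ~: S0) a1 b1.
    have ax : linked (~: S0) a1 x by rewrite linked_sym.
    have yb : linked (~: S0) y b1 by rewrite linked_sym.
    apply: (linked_trans (y := x)); first exact: linked_sub sub ax.
    apply: (linked_trans (y := a')); first exact: linked_sub sub xa'.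
    apply: (linked_trans (y := b')).
      by apply: (linked_edge (e := e')); rewrite ?setU11 // joinsC.
    exact: linked_sub sub (linked_trans b'y yb).
  have e1F : e1 \notin e' |: ~: S0 by rewrite !inE negb_or e1S eq_sym e'1.
  have [C [uC e1C CF lkC]] := cycle_of_path ab1 e1F j1 lk.
  exists C; split => //; apply/negPn/negP => e'C.
  have sub2 : C :\ e1 \subset ~: S0.
    apply/subsetP => z zC; have := subsetP CF z zC; rewrite !inE => /orP[/eqP ze'|//].
    by move: zC; rewrite ze' !inE (negbTE e'C) andbF.
  move: (linked_sub sub2 lkC) => lk2.
  by move: nxy; rewrite (linked_trans xa1 (linked_trans lk2 b1y)).
have [C2 [u2 e1C2 C2F e2C2]] := mk _ e2S e21.
have [C3 [u3 e1C3 C3F e3C3]] := mk _ e3S e31.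
have n23 : C2 != C3.
  apply/negP => /eqP eC.
  have : e3 \in C2 :\ e1 by rewrite !inE e31 eC e3C3.
  by move/(subsetP C2F); rewrite !inE (negbTE e32) e3S.
have := cact e1; have := card_pads_ge2 u2 u3 n23 e1C2 e1C3.
by move=> h /eqP h1; rewrite h1 in h.
Qed.

End GT.

Section Gmap.
Variable A : Type.

Lemma connect_map (T U : finType) (r : rel T) (r' : rel U) (f : T -> U) :
  (forall x y, r x y -> connect r' (f x) (f y)) ->
  forall x y, connect r x y -> connect r' (f x) (f y).
Proof.
move=> H x y /connectP [p pth ->]; elim: p x pth => [|z p IH] x /=.
  by rewrite connect0.
by case/andP=> rxz pz; apply: connect_trans (H _ _ rxz) (IH _ pz).
Qed.

Variable G : graph A.
Variable h : gV G -> gV G.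

Lemma gmap_wf : graph_wf G -> graph_wf (gmap G h).
Proof.
move=> /forallP wf; apply/forallP => e; have /andP[s t] := wf e.
by rewrite /= !imset_f.
Qed.

Lemma linked_gmap (F : {set gE G}) x y :
  linked F x y -> @linked A (gmap G h) F (h x) (h y).
Proof.
apply: connect_map => u z /uadjP[e eF j]; apply: connect1; apply/uadjP.
by exists e => //; move: j; rewrite /joins /= => /orP[]/andP[/eqP-> /eqP->];
  rewrite !eqxx ?orbT.
Qed.

Lemma gconnected_gmap : gconnected G -> gconnected (gmap G h).
Proof.
move=> /forallP c; apply/forallP => x'; apply/implyP => /imsetP[x xv ->].
apply/forallP => y'; apply/implyP => /imsetP[y yv ->].
have := c x; rewrite xv /= => /forallP /(_ y); rewrite yv /=.
exact: linked_gmap.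
Qed.

Hypothesis wf : graph_wf G.
Hypothesis inj : {in verts G &, injective h}.

Lemma ucycle_gmap (C : {set gE G}) : @ucycle_set A G C -> @ucycle_set A (gmap G h) C.
Proof.
case/existsP=> k /existsP[es /existsP[vs /and5P[k0 ies ivs Ces /forallP J]]].
have vsV i : vs i \in verts G.
  have /forallP/(_ (es i))/andP[sv tv] := wf.
  by case/orP: (J i) => /andP[/eqP e1 /eqP e2]; [rewrite -e1 | rewrite -e2].
apply/existsP; exists k; apply/existsP; exists es.
apply/existsP; exists [ffun i => h (vs i)].
apply/and5P; split => //.
- apply/injectiveP => i j; rewrite !ffunE => /inj.
  by move=> /(_ (vsV i) (vsV j)); apply: (injectiveP _ ivs).
- apply/forallP => i; rewrite !ffunE /=.
  by case/orP: (J i) => /andP[/eqP-> /eqP->]; rewrite !eqxx ?orbT.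
Qed.

Lemma dordering_gmap (C : {set gE G}) f :
  @dordering A (gmap G h) C f = @dordering A G C f.
Proof.
rewrite /dordering /=; congr [&& _, _ & _]; apply: eq_forallb => i.
have /forallP/(_ (f i))/andP[sv _] := wf.
have /forallP/(_ (f (ordS i)))/andP[_ tv] := wf.
by apply/eqP/eqP => [/inj|->] //; apply.
Qed.

End Gmap.

Section Iso.
Variables (A : Type) (V E : finType) (vs : {set V}) (s t : E -> V) (l : E -> A).
Variable h : V -> V.
Local Notation G := (@Graph A V E vs s t l).
Hypothesis wf : graph_wf G.
Hypothesis inj : {in vs &, injective h}.

Definition hinv y := odflt y [pick x in vs | h x == y].

Lemma hinvK x : x \in vs -> hinv (h x) = x.
Proof.
move=> xv; rewrite /hinv; case: pickP => [x' /andP[x'v /eqP e]|/(_ x)] /=.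
  exact: inj.
by rewrite xv eqxx.
Qed.

Lemma hinv_inj : {in h @: vs &, injective hinv}.
Proof.
by move=> _ _ /imsetP[x xv ->] /imsetP[y yv ->]; rewrite !hinvK // => ->.
Qed.

Lemma sV e : s e \in vs.
Proof. by have /forallP/(_ e)/andP[] := wf. Qed.
Lemma tV e : t e \in vs.
Proof. by have /forallP/(_ e)/andP[] := wf. Qed.

Lemma hinv_vs : hinv @: (h @: vs) = vs.
Proof.
rewrite -imset_comp; apply/setP => x; apply/imsetP/idP => [[y yv ->]|xv].
  by rewrite /= hinvK.
by exists x => //=; rewrite hinvK.
Qed.

Lemma hinv_s : (fun e => hinv (h (s e))) = s.
Proof. by apply: functional_extensionality => e; rewrite hinvK // sV. Qed.
Lemma hinv_t : (fun e => hinv (h (t e))) = t.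
Proof. by apply: functional_extensionality => e; rewrite hinvK // tV. Qed.

Lemma ucycle_gmap_iff (C : {set E}) :
  @ucycle_set A (gmap G h) C = @ucycle_set A G C.
Proof.
apply/idP/idP; last exact: ucycle_gmap.
move/(@ucycle_gmap A (gmap G h) hinv (@gmap_wf A G h wf) hinv_inj C).
by rewrite /gmap /= hinv_vs hinv_s hinv_t.
Qed.

Lemma gconnected_gmap_iff : gconnected (gmap G h) = gconnected G.
Proof.
apply/idP/idP; last exact: gconnected_gmap.
move/(@gconnected_gmap A (gmap G h) hinv).
by rewrite /gmap /= hinv_vs hinv_s hinv_t.
Qed.

Lemma pads_gmap : pads (gmap G h) = pads G.
Proof. by apply/setP => C; rewrite !inE ucycle_gmap_iff. Qed.

Lemma oriented_cactus_gmap :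
  oriented_cactus (gmap G h) = oriented_cactus G.
Proof.
rewrite /oriented_cactus /cactus gconnected_gmap_iff pads_gmap.
congr (_ && _); apply: eq_forallb => C; congr (_ ==> _).
by apply: eq_existsb => f; rewrite dordering_gmap.
Qed.

End Iso.

Section TauIso.
Variables (C : pzRingType) (A : pzRingType) (kappa : seq A -> C).

Lemma tau0_gmap (G : graph A) (h : gV G -> gV G) :
  graph_wf G -> {in verts G &, injective h} ->
  tau0 kappa (gmap G h) = tau0 kappa G.
Proof.
case: G h => V E vs s t l h /= wf inj.
rewrite /tau0 oriented_cactus_gmap // pads_gmap //.
case: ifP => // _; apply: eq_bigr => P _; rewrite /pad_cumulant.
by rewrite (eq_pick (fun f => @dordering_gmap _ _ h wf inj P f)).
Qed.

End TauIso.

Section Part.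
Variable V : finType.
Implicit Types (P Q : {set {set V}}) (D B : {set V}).

Lemma triv_of P :
  (forall A B x, A \in P -> B \in P -> x \in A -> x \in B -> A = B) -> trivIset P.
Proof.
move=> H; apply/trivIsetP => A B PA PB nAB; apply/pred0P => x /=.
apply/negbTE/negP => /andP[xA xB].
by move/eqP: nAB; apply; apply: H xA xB.
Qed.

Lemma triv_eq P A B x : trivIset P -> A \in P -> B \in P -> x \in A -> x \in B -> A = B.
Proof. by move=> tP PA PB xA xB; rewrite -(def_pblock tP PA xA) (def_pblock tP PB xB). Qed.

Lemma cover_mem P B x : B \in P -> x \in B -> x \in cover P.
Proof. by move=> PB xB; apply/bigcupP; exists B. Qed.

Lemma brep_mem P x : x \in cover P -> brep P x \in pblock P x.
Proof.
move=> xc; rewrite /brep; case: pickP => [y yb|/(_ x)] //=.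
by rewrite mem_pblock xc.
Qed.

Lemma brep_eq P x y : x \in cover P -> pblock P x = pblock P y -> brep P x = brep P y.
Proof.
move=> xc e; rewrite /brep -e; case: pickP => [//|/(_ x)] /=.
by rewrite mem_pblock xc.
Qed.

Lemma pblock_brep P x : trivIset P -> x \in cover P -> pblock P (brep P x) = pblock P x.
Proof. by move=> tP xc; apply: same_pblock => //; apply: brep_mem. Qed.

Lemma brep_brep P x : trivIset P -> x \in cover P -> brep P (brep P x) = brep P x.
Proof.
move=> tP xc; apply: brep_eq; last exact: pblock_brep.
by rewrite -mem_pblock pblock_brep // brep_mem.
Qed.

Lemma partition_sub P D B : partition P D -> B \in P -> B \subset D.
Proof.
case/and3P=> /eqP <- _ _ PB; apply/subsetP => x xB; exact: cover_mem xB.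
Qed.

Variable D : {set V}.
Variable g : V -> V.

Definition compat P :=
  [forall x in D, forall y in D, (g x == g y) ==> (pblock P x == pblock P y)].

Definition img P : {set {set V}} := [set g @: B | B : {set V} in P].
Definition pre (Q : {set {set V}}) : {set {set V}} := [set (g @^-1: B) :&: D | B : {set V} in Q].


Lemma P1 Q : partition Q (g @: D) ->
  [/\ partition (pre Q) D, compat (pre Q) & img (pre Q) = Q].
Proof.
move=> pQ; have /and3P[/eqP cQ tQ nQ] := pQ.
have sub B : B \in Q -> B \subset g @: D by apply: partition_sub.
have imgpre B : B \in Q -> g @: (g @^-1: B :&: D) = B.
  move=> QB; apply/setP => y; apply/imsetP/idP => [[x] |yB].
    by rewrite !inE => /andP[xB _] ->.
  have /imsetP[x xD yx] := subsetP (sub B QB) y yB.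
  by exists x => //; rewrite !inE -yx yB.
have tpre : trivIset (pre Q).
  apply: triv_of => _ _ x /imsetP[B1 QB1 ->] /imsetP[B2 QB2 ->].
  rewrite !inE => /andP[x1 _] /andP[x2 _].
  by rewrite (triv_eq tQ QB1 QB2 x1 x2).
have cpre : cover (pre Q) = D.
  apply/setP => x; apply/bigcupP/idP => [[_ /imsetP[B QB ->]]|xD].
    by rewrite !inE => /andP[].
  have : g x \in cover Q by rewrite cQ imset_f.
  case/bigcupP => B QB gxB; exists (g @^-1: B :&: D); first exact: imset_f.
  by rewrite !inE gxB xD.
split.
- rewrite /partition cpre eqxx tpre /=; apply/imsetP => -[B QB].
  move/setP => e.
  have /set0Pn[y yB] : B != set0 by apply: contraNneq nQ => <-.
  have /imsetP[x xD yx] := subsetP (sub B QB) y yB.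
  by have := e x; rewrite !inE -yx yB xD.
- apply/forallP => x; apply/implyP => xD; apply/forallP => y; apply/implyP => yD.
  apply/implyP => /eqP gxy.
  have : g x \in cover Q by rewrite cQ imset_f.
  case/bigcupP => B QB gxB.
  have PB : g @^-1: B :&: D \in pre Q by apply: imset_f.
  rewrite (def_pblock tpre PB (x := x)) ?(def_pblock tpre PB (x := y)) //.
    by rewrite !inE -gxy gxB.
  by rewrite !inE gxB.
- rewrite /img /pre -imset_comp; rewrite -[RHS]imset_id; apply: eq_in_imset => B QB.
  exact: imgpre.
Qed.

Lemma pre_img_blk P B : partition P D -> compat P -> B \in P ->
  g @^-1: (g @: B) :&: D = B.
Proof.
move=> pP cP PB; have /and3P[/eqP cPD tP _] := pP.
have sB := partition_sub pP PB.
apply/setP => x; rewrite !inE; apply/andP/idP => [[/imsetP[b bB gxb] xD]|xB].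
  have bD : b \in D by apply: (subsetP sB).
  have := cP; move/forallP/(_ x); rewrite xD /= => /forallP/(_ b); rewrite bD /=.
  rewrite gxb eqxx /= (def_pblock tP PB bB) => /eqP <-.
  by rewrite mem_pblock cPD.
by rewrite imset_f // (subsetP sB).
Qed.

Lemma P2 P : partition P D -> compat P ->
  partition (img P) (g @: D) /\ pre (img P) = P.
Proof.
move=> pP cP; have /and3P[/eqP cPD tP nP] := pP.
split; last first.
  rewrite /img /pre -imset_comp -[RHS]imset_id; apply: eq_in_imset => B PB.
  exact: (pre_img_blk pP cP PB).
apply/and3P; split.
- apply/eqP/setP => y; apply/bigcupP/imsetP => [[_ /imsetP[B PB ->] /imsetP[x xB ->]]|[x xD ->]].
    by exists x => //; rewrite -cPD (cover_mem PB xB).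
  have : x \in cover P by rewrite cPD.
  case/bigcupP => B PB xB; exists (g @: B); [exact: imset_f | exact: imset_f].
- apply: triv_of => _ _ y /imsetP[B1 PB1 ->] /imsetP[B2 PB2 ->].
  move=> /imsetP[x1 x1B ->] /imsetP[x2 x2B e].
  have x1D := subsetP (partition_sub pP PB1) _ x1B.
  have x2D := subsetP (partition_sub pP PB2) _ x2B.
  have := cP; move/forallP/(_ x1); rewrite x1D /= => /forallP/(_ x2); rewrite x2D /=.
  rewrite e eqxx /= (def_pblock tP PB1 x1B) (def_pblock tP PB2 x2B) => /eqP -> //.
- apply/imsetP => -[B PB] /esym/eqP; rewrite imset_eq0 => /eqP B0.
  by rewrite -B0 PB in nP.
Qed.

End Part.

Local Open Scope ring_scope.
Section L1.
Variables (C : pzRingType) (A : pzRingType) (kappa : seq A -> C).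
Variables (V E : finType) (D : {set V}) (s t : E -> V) (l : E -> A) (g : V -> V).
Local Notation G := (@Graph A V E D s t l).
Hypothesis wf : graph_wf G.

Lemma sD e : s e \in D. Proof. by have /forallP/(_ e)/andP[] := wf. Qed.
Lemma tD e : t e \in D. Proof. by have /forallP/(_ e)/andP[] := wf. Qed.

Section Fix.
Variable P : {set {set V}}.
Hypothesis pP : partition P D.
Hypothesis cP : compat D g P.
Local Notation P' := (img g P).

Let tP : trivIset P. Proof. by case/and3P: pP. Qed.
Let cPD : cover P = D. Proof. by case/and3P: pP => /eqP. Qed.
Let pP' : partition P' (g @: D). Proof. by case: (P2 pP cP). Qed.
Let tP' : trivIset P'. Proof. by case/and3P: pP'. Qed.
Let cPD' : cover P' = g @: D. Proof. by case/and3P: pP' => /eqP. Qed.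

Lemma pblock_img y : y \in D -> pblock P' (g y) = g @: pblock P y.
Proof.
move=> yD; apply: def_pblock => //; last by rewrite imset_f // mem_pblock cPD.
by apply: imset_f; apply: pblock_mem; rewrite cPD.
Qed.

Lemma brepD x : x \in D -> brep P x \in D.
Proof.
move=> xD; have := brep_mem (P := P) (x := x); rewrite cPD => /(_ xD).
by apply: (subsetP (partition_sub pP _)); apply: pblock_mem; rewrite cPD.
Qed.

Lemma key x : x \in D -> brep P' (g x) = brep P' (g (brep P x)).
Proof.
move=> xD; apply: brep_eq; first by rewrite cPD' imset_f.
by rewrite !pblock_img ?brepD // pblock_brep // cPD.
Qed.

Lemma quot_eq :
  @gquot A (gmap G g) P' = gmap (@gquot A G P) (fun y => brep P' (g y)).
Proof.
rewrite /gquot /gmap /=; f_equal.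
- rewrite -!imset_comp; apply: eq_in_imset => x xD /=; exact: key.
- by apply: functional_extensionality => e; rewrite key // sD.
- by apply: functional_extensionality => e; rewrite key // tD.
Qed.

Lemma quot_inj : {in verts (@gquot A G P) &, injective (fun y => brep P' (g y))}.
Proof.
move=> _ _ /imsetP[x1 x1D ->] /imsetP[x2 x2D ->]; rewrite -!key // => e.
have m1 : brep P' (g x1) \in pblock P' (g x1) by apply: brep_mem; rewrite cPD' imset_f.
have m2 : brep P' (g x2) \in pblock P' (g x2) by apply: brep_mem; rewrite cPD' imset_f.
rewrite e in m1.
have bl : pblock P' (g x1) = pblock P' (g x2).
  apply: (triv_eq tP' _ _ m1 m2); apply: pblock_mem; rewrite cPD' imset_f //.
rewrite !pblock_img // in bl.
have b1 : pblock P x1 \in P by apply: pblock_mem; rewrite cPD.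
have b2 : pblock P x2 \in P by apply: pblock_mem; rewrite cPD.
have := pre_img_blk pP cP b1; rewrite bl (pre_img_blk pP cP b2) => e2.
by apply: brep_eq; rewrite ?cPD.
Qed.

Lemma tau0_quot : tau0 kappa (@gquot A (gmap G g) P') = tau0 kappa (@gquot A G P).
Proof.
rewrite quot_eq tau0_gmap //; last exact: quot_inj.
exact: gmap_wf.
Qed.

End Fix.

Lemma tau_gmap :
  tau kappa (gmap G g) =
  \sum_(P : {set {set V}} | partition P D && compat D g P) tau0 kappa (@gquot A G P).
Proof.
rewrite /tau /=.
rewrite (reindex_onto (img g) (pre D g)) /=; last first.
  by move=> Q pQ; case: (P1 pQ).
have filt P : (partition (img g P) (g @: D) && (pre D g (img g P) == P)) =
    (partition P D && compat D g P).
  apply/andP/andP => [[pP /eqP e]|[pP cP]].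
    by case: (P1 pP); rewrite e.
  by case: (P2 pP cP) => -> ->.
apply: eq_big => [P|P]; first exact: filt.
by rewrite filt => /andP[pP cP]; rewrite tau0_quot.
Qed.

End L1.

Section E.
Variables (C A : pzRingType) (kappa : seq A -> C).
Variables (t q : gmono A).
Local Notation Gt := (mgraph t).
Local Notation Gq := (mgraph q).
Local Notation V := (gV Gt + gV Gq)%type.
Local Notation E := (gE Gt + gE Gq)%type.

Definition DU : {set V} := inl @: verts Gt :|: inr @: verts Gq.

Definition UG : graph A :=
  @Graph A V E DU (fun e => sum_map (src Gt) (src Gq) e)
    (fun e => sum_map (tgt Gt) (tgt Gq) e)
    (fun e => match e with inl e1 => lab Gt e1 | inr e2 => lab Gq e2 end).

Definition fm (x : V) : V := if x == inr (vout q) then inl (vin t) else x.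
Definition dm (y : V) : V := if y == fm (inl (vout t)) then fm (inr (vin q)) else y.
Definition g1 (x : V) : V := dm (fm x).

Lemma delta_gmul : delta (gmul t q) = gmap UG g1.
Proof.
rewrite /delta /gmul /gmap /=; f_equal.
by rewrite -imset_comp.
Qed.

Variables (v w : gV Gt).
Definition fvw (x : gV Gt) := if x == w then v else x.
Definition sm (x : V) : V := sum_map fvw id x.
Definition fm' (x : V) : V := if x == inr (vout q) then inl (fvw (vin t)) else x.
Definition dm' (y : V) : V :=
  if y == fm' (inl (fvw (vout t))) then fm' (inr (vin q)) else y.
Definition g2 (x : V) : V := dm' (fm' (sm x)).

Lemma smDU : sm @: DU = inl @: (fvw @: verts Gt) :|: inr @: verts Gq.
Proof. by rewrite /DU imsetU -!imset_comp; congr (_ :|: _); apply: eq_imset. Qed.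

Lemma delta_gmul_id : delta (gmul (identify v w) q) = gmap UG g2.
Proof.
rewrite /delta /gmul /gmap; f_equal.
- have -> : [set g2 x | x in DU] = [set dm' (fm' x) | x in sm @: DU].
    by rewrite -imset_comp.
  rewrite smDU -imset_comp /= -[LHS]imset_comp; apply: eq_imset => x.
  by rewrite /= /dm' /fm' /fvw.
- by apply: functional_extensionality => -[e|e].
- by apply: functional_extensionality => -[e|e].
Qed.


Hypothesis twf : gmono_wf t.
Hypothesis qwf : gmono_wf q.
Hypothesis hv : v \in verts Gt.
Hypothesis hw : w \in verts Gt.
Hypothesis hvw : v != w.
Hypothesis h3 : (3 <= edge_conn Gt v w)%N.

Lemma inlD x : x \in verts Gt -> (inl x : V) \in DU.
Proof. by move=> xv; rewrite /DU in_setU imset_f. Qed.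
Lemma inrD x : x \in verts Gq -> (inr x : V) \in DU.
Proof. by move=> xv; rewrite /DU in_setU orbC imset_f. Qed.

Lemma UG_wf : graph_wf UG.
Proof.
case/and4P: twf => /forallP wt _ _ _; case/and4P: qwf => /forallP wq _ _ _.
apply/forallP => -[e|e] /=.
  by case/andP: (wt e) => s1 t1; rewrite !inlD.
by case/andP: (wq e) => s1 t1; rewrite !inrD.
Qed.

Local Notation p := (inr (vout q) : V).
Local Notation a := (inl (vin t) : V).
Local Notation o := (inl (vout t) : V).
Local Notation i := (inr (vin q) : V).

Lemma pD : p \in DU. Proof. by case/and4P: qwf => _ _ _ h; rewrite inrD. Qed.
Lemma aD : a \in DU. Proof. by case/and4P: twf => _ _ h _; rewrite inlD. Qed.
Lemma oD : o \in DU. Proof. by case/and4P: twf => _ _ _ h; rewrite inlD. Qed.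
Lemma iD : i \in DU. Proof. by case/and4P: qwf => _ _ h _; rewrite inrD. Qed.

Lemma compat_of (D : {set V}) g (P : {set {set V}}) :
  (forall z, pblock P (g z) = pblock P z) -> compat D g P.
Proof.
move=> H; apply/forallP => x; apply/implyP => _; apply/forallP => y; apply/implyP => _.
by apply/implyP => /eqP e; rewrite -(H x) e H.
Qed.

Lemma compat_use (D : {set V}) g (P : {set {set V}}) x y :
  compat D g P -> x \in D -> y \in D -> g x = g y -> pblock P x = pblock P y.
Proof.
move/forallP/(_ x) => + xD yD e; rewrite xD /= => /forallP/(_ y); rewrite yD /= e eqxx.
by move/eqP.
Qed.

Lemma g1_pa : g1 p = g1 a.
Proof. by rewrite /g1 /fm eqxx. Qed.

Lemma g1_oi : g1 o = g1 i.
Proof.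
rewrite /g1 /dm; have fo : fm o = o by rewrite /fm.
by rewrite fo eqxx; case: ifP.
Qed.

Lemma compat_g1 P : compat DU g1 P =
  (pblock P p == pblock P a) && (pblock P o == pblock P i).
Proof.
apply/idP/idP => [cP|/andP[/eqP pa /eqP oi]].
  by rewrite (compat_use cP pD aD g1_pa) (compat_use cP oD iD g1_oi) !eqxx.
apply: compat_of.
have hf z : pblock P (fm z) = pblock P z by rewrite /fm; case: eqP => [->|].
move=> z; rewrite /g1 /dm; case: eqP => [e|_]; last exact: hf.
by rewrite hf -oi -(hf z) e hf.
Qed.

Lemma fvw_v : fvw v = v. Proof. by rewrite /fvw (negbTE hvw). Qed.
Lemma fvw_w : fvw w = v. Proof. by rewrite /fvw eqxx. Qed.

Lemma g2_pa : g2 p = g2 a.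
Proof. by rewrite /g2 /fm' /sm /= eqxx. Qed.

Lemma g2_oi : g2 o = g2 i.
Proof.
rewrite /g2 /dm' /sm /=; have fo : fm' (inl (fvw (vout t))) = inl (fvw (vout t)).
  by rewrite /fm'.
by rewrite fo eqxx; case: ifP.
Qed.

Lemma g2_vw : g2 (inl v) = g2 (inl w).
Proof. by rewrite /g2 /sm /= fvw_v fvw_w. Qed.

Lemma compat_g2 P : compat DU g2 P =
  [&& pblock P p == pblock P a, pblock P o == pblock P i &
      pblock P (inl v) == pblock P (inl w)].
Proof.
apply/idP/idP => [cP|/and3P[/eqP pa /eqP oi /eqP vw]].
  rewrite (compat_use cP pD aD g2_pa) (compat_use cP oD iD g2_oi).
  by rewrite (compat_use cP (inlD hv) (inlD hw) g2_vw) !eqxx.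
apply: compat_of.
have hs z : pblock P (sm z) = pblock P z.
  by case: z => [x|x] //=; rewrite /fvw; case: eqP => [->|].
have hf z : pblock P (fm' z) = pblock P z.
  by rewrite /fm'; case: eqP => [->|] //; rewrite pa -(hs a).
move=> z; rewrite /g2 /dm'; case: eqP => [e|_]; last by rewrite hf hs.
rewrite hf -oi -(hs z) -(hf (sm z)) e hf; exact: (esym (hs o)).
Qed.

Lemma vanish P : partition P DU -> pblock P (inl v) != pblock P (inl w) ->
  tau0 kappa (@gquot A UG P) = 0.
Proof.
move=> pP nvw; rewrite /tau0; case: ifP => // /andP[cact _].
have /and3P[/eqP cP tP _] := pP.
set X := brep P (inl v); set Y := brep P (inl w).
have XY : X != Y.
  apply: contra nvw => /eqP e.
  rewrite -(pblock_brep tP (_ : inl v \in cover P)) ?cP ?inlD //.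
  by rewrite -/X e pblock_brep // cP inlD.
have [S /andP[cS nl]] := cactus_sep cact XY.
pose St := [set e : gE Gt | (inl e : E) \in S].
have cSt : (#|St| <= 2)%N.
  have inl_inj : injective (@inl (gE Gt) (gE Gq)) by move=> x y [].
  rewrite -(card_imset _ inl_inj) (leq_trans _ cS) //; apply: subset_leq_card.
  by apply/subsetP => _ /imsetP[e eSt ->]; rewrite inE in eSt.
have lkt : linked (~: St) v w.
  apply/negPn/negP => nl'.
  have := @big_minn_le {set gE Gt} (fun S0 : {set gE Gt} => ~~ linked (~: S0) v w)
    (fun S0 : {set gE Gt} => #|S0|) #|gE Gt| St nl'.
  rewrite -/(edge_conn Gt v w) => h; have := leq_trans h3 (leq_trans h cSt).
  by [].
move: nl; rewrite /linked.
have -> // := connect_map (f := fun x => brep P (inl x : V)) _ lkt.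
move=> x y /uadjP[e eSt j]; apply: (@linked_edge A (@gquot A UG P) (~: S) (inl e)).
  by move: eSt; rewrite !inE.
by move: j; rewrite /joins /= => /orP[]/andP[/eqP-> /eqP->]; rewrite !eqxx ?orbT.
Qed.

Lemma psi_eq : psi kappa (gmul (identify v w) q) = psi kappa (gmul t q).
Proof.
rewrite /psi delta_gmul_id delta_gmul.
rewrite !(tau_gmap kappa _ UG_wf).
rewrite [RHS](bigID (fun P => pblock P (inl v) == pblock P (inl w))) /=.
rewrite [X in _ = _ + X]big1 ?addr0; last first.
  by move=> P /andP[/andP[pP _] nvw]; apply: vanish.
apply: eq_bigl => P; rewrite compat_g1 compat_g2.
by rewrite !andbA.
Qed.

End E.


Unset Implicit Arguments.
Local Open Scope ring_scope.

Theorem corollary2p7 (R : realType) (A : algType R[i]) (phi : A -> R[i])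
  (phi_lin : forall (c : R[i]) (a b : A), phi (c *: a + b) = c * phi a + phi b)
  (phi_unit : phi 1 = 1)
  (phi_trace : forall a b : A, phi (a * b) = phi (b * a))
  (kappa : seq A -> R[i]) (kappa_cum : free_cumulants phi kappa)
  (t : gmono A) (t_wf : gmono_wf t)
  (v w : gV (mgraph t)) (hv : v \in verts (mgraph t)) (hw : w \in verts (mgraph t))
  (hvw : v != w) (h3 : (3 <= edge_conn (mgraph t) v w)%N) :
  eq_mod_psi kappa (@identify A t v w) t.
Proof.
move=> u wfu; rewrite /psi_lc /lc_mul /= cats0 big_cat !big_map /=.
rewrite -big_split /=.
elim: u wfu => [|j u IH] /=; first by rewrite big_nil.
case/andP => qwf /IH IH'; rewrite big_cons IH' addr0.
rewrite (psi_eq kappa t_wf qwf hv hw hvw h3).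
by rewrite mul1r mulN1r mulNr addrN.
Qed.
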